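(* For all closed terms $t_0,t_1$ of $\lambda_S$, if $t_0\equiv t_1$ then $t_0\approx_{\emptyset}t_1$.
   Context: Terms of $\lambda_S$: $t ::= x \mid \lambda x.t \mid t\,t \mid \mathcal{S}k.t \mid \langle t\rangle$ (shift $\mathcal{S}k.t$ binds $k$, reset $\langle t\rangle$), up to $\alpha$-conversion; closed means no free variables. Values: $v ::= \lambda x.t$. Pure contexts $E ::= \Box \mid v\,E \mid E\,t$; evaluation contexts $F ::= \Box \mid v\,F \mid F\,t \mid \langle F\rangle$; contexts $C ::= \Box \mid \lambda x.C \mid t\,C \mid C\,t \mid \mathcal{S}k.C \mid \langle C\rangle$. Reduction: $F[(\lambda x.t)\,v] \to F[t\{v/x\}]$; $F[\langle E[\mathcal{S}k.t]\rangle] \to F[\langle t\{\lambda x.\langle E[x]\rangle/k\}\rangle]$ ($x\notin\mathrm{fv}(E)$); $F[\langle v\rangle]\to F[v]$. $\to^*$ reflexive-transitive closure; $t\Downarrow t'$ means $t\to^*t'$ with $t'$ irreducible. Stuck: not a value and irreducible; normal form: value or stuck term. Closures: for $R$ a relation on closed terms, $\widetilde R$ is the smallest relation containing $R$, all $(x,x)$, and closed under all term constructors, restricted to closed terms; $\widehat R$ is the smallest relation on closed evaluation contexts with $\Box\widehat R\Box$, $v_0F_0\widehat Rv_1F_1$ if $F_0\widehat RF_1,v_0\widetilde Rv_1$; $F_0t_0\widehat RF_1t_1$ if $F_0\widehat RF_1,t_0\widetilde Rt_1$; $\langle F_0\rangle\widehat R\langle F_1\rangle$ if $F_0\widehat RF_1$.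 Environmental bisimilarity: an environment $\mathcal E$ is a relation on closed normal forms relating values only with values and stuck terms only with stuck terms. An environmental relation $\mathcal X$ is a set of environments and triples $(\mathcal E,t_0,t_1)$ with $t_0,t_1$ closed, written $t_0\,\mathcal X_{\mathcal E}\,t_1$. $\mathcal X$ is an environmental bisimulation if (1) whenever $t_0\mathcal X_{\mathcal E}t_1$: (a) $t_0\to t_0'$ implies $t_1\to^*t_1'$ with $t_0'\mathcal X_{\mathcal E}t_1'$; (b) if $t_0$ is a value $v_0$ then $t_1\to^*v_1$, a value, and $\mathcal E\cup\{(v_0,v_1)\}\in\mathcal X$; (c) if $t_0$ is stuck then $t_1\to^*t_1'$ stuck and $\mathcal E\cup\{(t_0,t_1')\}\in\mathcal X$; (d) symmetric conditions for $t_1$; (2) whenever $\mathcal E\in\mathcal X$: (a) $(\lambda x.t_0)\mathcal E(\lambda x.t_1)$ and $v_0\widetilde{\mathcal E}v_1$ imply $t_0\{v_0/x\}\mathcal X_{\mathcal E}t_1\{v_1/x\}$; (b) $E_0[\mathcal Sk.t_0]\mathcal E E_1[\mathcal Sk.t_1]$ and pure contexts $E_0'\widehat{\mathcal E}E_1'$ imply $\langle t_0\{\lambda x.\langle E_0'[E_0[x]]\rangle/k\}\rangle\mathcal X_{\mathcal E}\langle t_1\{\lambda x.\langle E_1'[E_1[x]]\rangle/k\}\rangle$, $x$ fresh. $\approx$ is the largest environmental bisimulation, $t_0\approx_{\mathcal E}t_1$ meaning $(\mathcal E,t_0,t_1)\in\approx$. Contextual equivalence: $t_0\equiv t_1$ iff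 for all contexts $C$ with $C[t_0],C[t_1]$ closed, $C[t_0]\Downarrow$ a value iff $C[t_1]\Downarrow$ a value, and $C[t_0]\Downarrow$ a stuck term iff $C[t_1]\Downarrow$ a stuck term. *)

(* Defs.v *)
(* lambda_S (CBV lambda calculus with shift/reset),
   terms in de Bruijn form (so alpha-equivalent terms are identical). *)
From Stdlib Require Import Arith.

Inductive term : Type :=
| Var   : nat -> term
| Lam   : term -> term
| App   : term -> term -> term
| Shift : term -> term          (* S k.t, binds k = index 0 in the body *)
| Reset : term -> term.

Fixpoint closed_at (n : nat) (t : term) : Prop :=
  match t with
  | Var m => m < n
  | Lam b => closed_at (S n) b
  | App a b => closed_at n a /\ closed_at n b
  | Shift b => closed_at (S n) b
  | Reset a => closed_at n a
  end.
Definition closed (t : term) : Prop := closed_at 0 t.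

Fixpoint lift (c : nat) (t : term) : term :=
  match t with
  | Var n => if n <? c then Var n else Var (S n)
  | Lam b => Lam (lift (S c) b)
  | App a b => App (lift c a) (lift c b)
  | Shift b => Shift (lift (S c) b)
  | Reset a => Reset (lift c a)
  end.

Fixpoint subst (k : nat) (u : term) (t : term) : term :=
  match t with
  | Var n => if n <? k then Var n else if n =? k then u else Var (pred n)
  | Lam b => Lam (subst (S k) (lift 0 u) b)
  | App a b => App (subst k u a) (subst k u b)
  | Shift b => Shift (subst (S k) (lift 0 u) b)
  | Reset a => Reset (subst k u a)
  end.

(* t{v/x} where t is the body of a binder for x *)
Definition inst (t v : term) : term := subst 0 v t.

Definition is_value (t : term) : Prop := exists b, t = Lam b.

(* evaluation contexts F ::= [] | v F | F t | <F>;  the value in  v F  is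
   stored as the body of the lambda, so that it is a value by construction *)
Inductive ectx : Type :=
| EHole  : ectx
| EAppR  : term -> ectx -> ectx
| EAppL  : ectx -> term -> ectx
| EReset : ectx -> ectx.

Fixpoint eplug (F : ectx) (t : term) : term :=
  match F with
  | EHole => t
  | EAppR b F' => App (Lam b) (eplug F' t)
  | EAppL F' u => App (eplug F' t) u
  | EReset F' => Reset (eplug F' t)
  end.

Fixpoint pure (F : ectx) : Prop :=
  match F with
  | EHole => True
  | EAppR _ F' => pure F'
  | EAppL F' _ => pure F'
  | EReset _ => False
  end.

Fixpoint elift (c : nat) (F : ectx) : ectx :=
  match F with
  | EHole => EHole
  | EAppR b F' => EAppR (lift (S c) b) (elift c F')
  | EAppL F' u => EAppL (elift c F') (lift c u)
  | EReset F' => EReset (elift c F')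
  end.

(* \x.<E[x]>  (x fresh) *)
Definition cont (E : ectx) : term := Lam (Reset (eplug (elift 0 E) (Var 0))).

(* \x.<E'[E[x]]>  (x fresh) *)
Definition cont2 (E' E : ectx) : term :=
  Lam (Reset (eplug (elift 0 E') (eplug (elift 0 E) (Var 0)))).

Inductive step : term -> term -> Prop :=
| step_beta : forall F t v, is_value v ->
    step (eplug F (App (Lam t) v)) (eplug F (inst t v))
| step_shift : forall F E t, pure E ->
    step (eplug F (Reset (eplug E (Shift t))))
         (eplug F (Reset (inst t (cont E))))
| step_reset : forall F v, is_value v ->
    step (eplug F (Reset v)) (eplug F v).

Inductive steps : term -> term -> Prop :=
| steps_refl : forall t, steps t t
| steps_step : forall t t' t'', step t t' -> steps t' t'' -> steps t t''.

Definition irreducible (t : term) : Prop := ~ exists t', step t t'.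
Definition stuck (t : term) : Prop := ~ is_value t /\ irreducible t.
Definition normal_form (t : term) : Prop := is_value t \/ stuck t.

Definition evals (t t' : term) : Prop := steps t t' /\ irreducible t'.

Inductive ctx : Type :=
| CHole   : ctx
| CLam    : ctx -> ctx
| CAppR   : term -> ctx -> ctx
| CAppL   : ctx -> term -> ctx
| CShift  : ctx -> ctx
| CReset  : ctx -> ctx.

(* plugging may capture variables (C[t] is syntactic replacement) *)
Fixpoint cplug (C : ctx) (t : term) : term :=
  match C with
  | CHole => t
  | CLam C' => Lam (cplug C' t)
  | CAppR u C' => App u (cplug C' t)
  | CAppL C' u => App (cplug C' t) u
  | CShift C' => Shift (cplug C' t)
  | CReset C' => Reset (cplug C' t)
  end.

Definition ctx_equiv (t0 t1 : term) : Prop :=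
  forall C : ctx, closed (cplug C t0) -> closed (cplug C t1) ->
    ((exists v, evals (cplug C t0) v /\ is_value v) <->
     (exists v, evals (cplug C t1) v /\ is_value v)) /\
    ((exists s, evals (cplug C t0) s /\ stuck s) <->
     (exists s, evals (cplug C t1) s /\ stuck s)).

Definition rel := term -> term -> Prop.

Definition is_env (E : rel) : Prop :=
  forall a b, E a b ->
    closed a /\ closed b /\
    ((is_value a /\ is_value b) \/ (stuck a /\ stuck b)).

Definition empty_rel : rel := fun _ _ => False.

Definition rel_add (E : rel) (a b : term) : rel :=
  fun x y => E x y \/ (x = a /\ y = b).

Inductive tclos (R : rel) : rel :=
| tc_base  : forall a b, R a b -> tclos R a b
| tc_var   : forall n, tclos R (Var n) (Var n)
| tc_lam   : forall a b, tclos R a b -> tclos R (Lam a) (Lam b)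
| tc_app   : forall a a' b b', tclos R a b -> tclos R a' b' ->
               tclos R (App a a') (App b b')
| tc_shift : forall a b, tclos R a b -> tclos R (Shift a) (Shift b)
| tc_reset : forall a b, tclos R a b -> tclos R (Reset a) (Reset b).

Definition tilde (R : rel) : rel :=
  fun a b => tclos R a b /\ closed a /\ closed b.

Inductive hat (R : rel) : ectx -> ectx -> Prop :=
| hat_hole  : hat R EHole EHole
| hat_appR  : forall b0 b1 F0 F1, hat R F0 F1 -> tilde R (Lam b0) (Lam b1) ->
                hat R (EAppR b0 F0) (EAppR b1 F1)
| hat_appL  : forall F0 F1 t0 t1, hat R F0 F1 -> tilde R t0 t1 ->
                hat R (EAppL F0 t0) (EAppL F1 t1)
| hat_reset : forall F0 F1, hat R F0 F1 -> hat R (EReset F0) (EReset F1).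

Record envrel : Type := {
  envs : rel -> Prop;
  trip : rel -> term -> term -> Prop
}.

Definition wf_envrel (X : envrel) : Prop :=
  (forall E, envs X E -> is_env E) /\
  (forall E t0 t1, trip X E t0 t1 -> is_env E /\ closed t0 /\ closed t1).

Definition env_bisim (X : envrel) : Prop :=
  wf_envrel X /\
  (forall E t0 t1, trip X E t0 t1 ->
     (forall t0', step t0 t0' -> exists t1', steps t1 t1' /\ trip X E t0' t1') /\
     (is_value t0 -> exists v1, steps t1 v1 /\ is_value v1 /\
                                 envs X (rel_add E t0 v1)) /\
     (stuck t0 -> exists s1, steps t1 s1 /\ stuck s1 /\
                              envs X (rel_add E t0 s1)) /\
     (forall t1', step t1 t1' -> exists t0', steps t0 t0' /\ trip X E t0' t1') /\
     (is_value t1 -> exists v0, steps t0 v0 /\ is_value v0 /\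
                                 envs X (rel_add E v0 t1)) /\
     (stuck t1 -> exists s0, steps t0 s0 /\ stuck s0 /\
                              envs X (rel_add E s0 t1))) /\
  (forall E, envs X E ->
     (forall b0 b1 v0 v1, E (Lam b0) (Lam b1) -> is_value v0 -> is_value v1 ->
        tilde E v0 v1 -> trip X E (inst b0 v0) (inst b1 v1)) /\
     (forall E0 E1 t0 t1 E0' E1',
        pure E0 -> pure E1 ->
        E (eplug E0 (Shift t0)) (eplug E1 (Shift t1)) ->
        pure E0' -> pure E1' -> hat E E0' E1' ->
        trip X E (Reset (inst t0 (cont2 E0' E0)))
                 (Reset (inst t1 (cont2 E1' E1))))).

(* ≈ : the largest environmental bisimulation (union of all of them) *)
Definition bisimilar (E : rel) (t0 t1 : term) : Prop :=
  exists X : envrel, env_bisim X /\ trip X E t0 t1.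

(* Main.v *)
Require Import Defs.
From Stdlib Require Import Arith Lia Classical.

Fixpoint ecomp (F G : ectx) : ectx :=
  match F with
  | EHole => G
  | EAppR b F' => EAppR b (ecomp F' G)
  | EAppL F' u => EAppL (ecomp F' G) u
  | EReset F' => EReset (ecomp F' G)
  end.

Lemma eplug_ecomp : forall F G x, eplug (ecomp F G) x = eplug F (eplug G x).
Proof. induction F; simpl; intros; try rewrite IHF; reflexivity. Qed.

Lemma pure_ecomp : forall F G, pure F -> pure G -> pure (ecomp F G).
Proof. induction F; simpl; intros; auto; tauto. Qed.

Lemma elift_ecomp : forall c F G, elift c (ecomp F G) = ecomp (elift c F) (elift c G).
Proof. induction F; simpl; intros; try rewrite IHF; reflexivity. Qed.

Lemma cont_ecomp : forall E' E, cont (ecomp E' E) = cont2 E' E.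
Proof. intros. unfold cont, cont2. rewrite elift_ecomp, eplug_ecomp. reflexivity. Qed.

Lemma step_ctx : forall G x y, step x y -> step (eplug G x) (eplug G y).
Proof.
  intros G x y H. destruct H.
  - rewrite <- !eplug_ecomp. apply step_beta; auto.
  - rewrite <- !eplug_ecomp. apply step_shift; auto.
  - rewrite <- !eplug_ecomp. apply step_reset; auto.
Qed.

Lemma eplug_lam : forall F x b, eplug F x = Lam b -> F = EHole /\ x = Lam b.
Proof. destruct F; simpl; intros; try discriminate; auto. Qed.

Lemma step_lam_inv : forall b y, ~ step (Lam b) y.
Proof.
  intros b y H. remember (Lam b) as w. destruct H;
  apply eplug_lam in Heqw; destruct Heqw; discriminate.
Qed.

Lemma step_var_inv : forall k y, ~ step (Var k) y.
Proof.
  intros k y H. remember (Var k) as w. destruct H; destruct F; discriminate.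
Qed.

Lemma step_shift_inv : forall s y, ~ step (Shift s) y.
Proof.
  intros k y H. remember (Shift k) as w. destruct H; destruct F; discriminate.
Qed.

Lemma value_irred : forall v y, is_value v -> ~ step v y.
Proof. intros v y [b ->]. apply step_lam_inv. Qed.

Lemma step_app_inv : forall a a' z, step (App a a') z ->
  (exists a1, step a a1 /\ z = App a1 a') \/
  (exists b a1, a = Lam b /\ step a' a1 /\ z = App (Lam b) a1) \/
  (exists b, a = Lam b /\ is_value a' /\ z = inst b a').
Proof.
  intros a a' z H. remember (App a a') as w. destruct H as [F t v Hv|F E t HE|F v Hv];
  destruct F; simpl in Heqw; try discriminate; injection Heqw; intros; subst.
  - right; right; eauto.
  - right; left. do 2 eexists; split; [reflexivity|split; [apply step_beta; auto|reflexivity]].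
  - left. eexists; split; [apply step_beta; auto|reflexivity].
  - right; left. do 2 eexists; split; [reflexivity|split; [apply step_shift; auto|reflexivity]].
  - left. eexists; split; [apply step_shift; auto|reflexivity].
  - right; left. do 2 eexists; split; [reflexivity|split; [apply step_reset; auto|reflexivity]].
  - left. eexists; split; [apply step_reset; auto|reflexivity].
Qed.

Lemma step_reset_inv : forall a z, step (Reset a) z ->
  (exists a1, step a a1 /\ z = Reset a1) \/
  (exists E s, pure E /\ a = eplug E (Shift s) /\ z = Reset (inst s (cont E))) \/
  (is_value a /\ z = a).
Proof.
  intros a z H. remember (Reset a) as w. destruct H as [F t v Hv|F E t HE|F v Hv];
  destruct F; simpl in Heqw; try discriminate; injection Heqw; intros; subst.
  - left. eexists; split; [apply step_beta; auto|reflexivity].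
  - right; left. eauto.
  - left. eexists; split; [apply step_shift; auto|reflexivity].
  - right; right; auto.
  - left. eexists; split; [apply step_reset; auto|reflexivity].
Qed.

Lemma pure_shift_not_value : forall E s, pure E -> ~ is_value (eplug E (Shift s)).
Proof. intros E s HE [b H]. apply eplug_lam in H. destruct H; discriminate. Qed.

Lemma pure_shift_irred : forall E s y, pure E -> ~ step (eplug E (Shift s)) y.
Proof.
  induction E; simpl; intros s y HE H.
  - eapply step_shift_inv; eauto.
  - destruct (step_app_inv _ _ _ H) as [[a1 [Ha _]]|[[b [a1 [Hb [Ha _]]]]|[b [Hb [Hv _]]]]].
    + eapply step_lam_inv; eauto.
    + eapply IHE; eauto.
    + eapply pure_shift_not_value; eauto.
  - destruct (step_app_inv _ _ _ H) as [[a1 [Ha _]]|[[b [a1 [Hb [Ha _]]]]|[b [Hb [Hv _]]]]].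
    + eapply IHE; eauto.
    + eapply pure_shift_not_value; eauto. exists b; eauto.
    + eapply pure_shift_not_value; eauto. exists b; eauto.
  - destruct HE.
Qed.

Lemma pure_shift_inj : forall E E' s s', pure E -> pure E' ->
  eplug E (Shift s) = eplug E' (Shift s') -> E = E' /\ s = s'.
Proof.
  induction E; destruct E'; simpl; intros s s' HE HE' H; try discriminate;
  try tauto; injection H; intros; subst.
  all: try (exfalso; eapply pure_shift_not_value; [| eexists; eauto]; eauto; fail).
  all: try (exfalso; eapply pure_shift_not_value; [| eexists; symmetry; eauto]; eauto; fail).
  all: try (edestruct IHE as [? ?]; [| |eassumption|]; eauto; subst; auto; fail).
  all: auto.
Qed.

Lemma step_det : forall x y1 y2, step x y1 -> step x y2 -> y1 = y2.
Proof.
  induction x; intros y1 y2 H1 H2.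
  - exfalso; eapply step_var_inv; eauto.
  - exfalso; eapply step_lam_inv; eauto.
  - destruct (step_app_inv _ _ _ H1) as [[a1 [Ha ->]]|[[b [a1 [-> [Ha ->]]]]|[b [-> [Hv ->]]]]];
    destruct (step_app_inv _ _ _ H2) as [[c1 [Hc ->]]|[[d [c1 [Hd [Hc ->]]]]|[d [Hd [Hw ->]]]]];
    try (exfalso; eapply step_lam_inv; eauto; fail);
    try (subst; exfalso; eapply step_lam_inv; eauto; fail);
    try (exfalso; eapply value_irred; eauto; fail).
    + rewrite (IHx1 _ _ Ha Hc); auto.
    + injection Hd; intros; subst. rewrite (IHx2 _ _ Ha Hc); auto.
    + injection Hd; intros; subst; auto.
  - exfalso; eapply step_shift_inv; eauto.
  - destruct (step_reset_inv _ _ H1) as [[a1 [Ha ->]]|[[E [s [HE [-> ->]]]]|[Hv ->]]];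
    destruct (step_reset_inv _ _ H2) as [[c1 [Hc ->]]|[[E' [s' [HE' [Heq ->]]]]|[Hw ->]]];
    try (subst; exfalso; eapply pure_shift_irred; eauto; fail);
    try (exfalso; eapply value_irred; eauto; fail);
    try (exfalso; eapply pure_shift_not_value; eauto; fail); auto.
    + rewrite (IHx _ _ Ha Hc); auto.
    + destruct (pure_shift_inj _ _ _ _ HE HE' Heq); subst; auto.
    + exfalso; eapply pure_shift_not_value; [exact HE'|]. rewrite <- Heq; auto.
Qed.

Lemma progress : forall x, closed_at 0 x ->
  is_value x \/ (exists E s, pure E /\ x = eplug E (Shift s)) \/ (exists y, step x y).
Proof.
  induction x; simpl; intros H.
  - lia.
  - left; eexists; eauto.
  - destruct H as [H1 H2].
    destruct (IHx1 H1) as [[b ->]|[[E [s [HE ->]]]|[y Hy]]].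
    + destruct (IHx2 H2) as [Hv|[[E [s [HE ->]]]|[y Hy]]].
      * right; right. eexists. exact (step_beta EHole b x2 Hv).
      * right; left. exists (EAppR b E), s; simpl; auto.
      * right; right. eexists. exact (step_ctx (EAppR b EHole) _ _ Hy).
    + right; left. exists (EAppL E x2), s; simpl; auto.
    + right; right. eexists. exact (step_ctx (EAppL EHole x2) _ _ Hy).
  - right; left. exists EHole, x; simpl; auto.
  - destruct (IHx H) as [Hv|[[E [s [HE ->]]]|[y Hy]]].
    + right; right. eexists. exact (step_reset EHole x Hv).
    + right; right. eexists. exact (step_shift EHole E s HE).
    + right; right. eexists. exact (step_ctx (EReset EHole) _ _ Hy).
Qed.

Lemma closed_mono : forall a n m, closed_at n a -> n <= m -> closed_at m a.
Proof.
  induction a; simpl; intros n0 m H Hle.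
  - lia.
  - eapply IHa; eauto; lia.
  - destruct H; split; eauto.
  - eapply IHa; eauto; lia.
  - eauto.
Qed.

Lemma lift_closed_id : forall a m c, closed_at m a -> m <= c -> lift c a = a.
Proof.
  induction a; simpl; intros m c H Hle.
  - destruct (Nat.ltb_spec n c); [reflexivity| lia].
  - rewrite (IHa (S m)); auto; lia.
  - destruct H; rewrite (IHa1 m), (IHa2 m); auto.
  - rewrite (IHa (S m)); auto; lia.
  - rewrite (IHa m); auto.
Qed.

Lemma subst_closed_id : forall a m k u, closed_at m a -> m <= k -> subst k u a = a.
Proof.
  induction a; simpl; intros m k u H Hle.
  - destruct (Nat.ltb_spec n k); [reflexivity| lia].
  - rewrite (IHa (S m)); auto; lia.
  - destruct H; rewrite (IHa1 m), (IHa2 m); auto.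
  - rewrite (IHa (S m)); auto; lia.
  - rewrite (IHa m); auto.
Qed.

Lemma closed_lift : forall a n c, closed_at n a -> closed_at (S n) (lift c a).
Proof.
  induction a; simpl; intros n0 c H.
  - destruct (Nat.ltb_spec n c); simpl; lia.
  - apply IHa; auto.
  - destruct H; split; auto.
  - apply IHa; auto.
  - auto.
Qed.

Lemma closed_subst : forall a n u k, closed_at (S n) a -> closed_at n u -> k <= n ->
  closed_at n (subst k u a).
Proof.
  induction a; simpl; intros n0 u k H Hu Hk.
  - destruct (Nat.ltb_spec n k); simpl; [lia|].
    destruct (Nat.eqb_spec n k); simpl; [auto|lia].
  - apply IHa; auto. apply closed_lift; auto. lia.
  - destruct H; split; auto.
  - apply IHa; auto. apply closed_lift; auto. lia.
  - auto.
Qed.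

Fixpoint closedF (n : nat) (F : ectx) : Prop :=
  match F with
  | EHole => True
  | EAppR b F' => closed_at (S n) b /\ closedF n F'
  | EAppL F' u => closedF n F' /\ closed_at n u
  | EReset F' => closedF n F'
  end.

Lemma eplug_closed : forall F n x, closed_at n (eplug F x) <-> closedF n F /\ closed_at n x.
Proof. induction F; simpl; intros; try rewrite IHF; tauto. Qed.

Lemma closedF_elift : forall F n c, closedF n F -> closedF (S n) (elift c F).
Proof.
  induction F; simpl; intros n c H; auto.
  - destruct H; split; auto. apply closed_lift; auto.
  - destruct H; split; auto. apply closed_lift; auto.
Qed.

Lemma closed_cont : forall E, closedF 0 E -> closed_at 0 (cont E).
Proof.
  intros E H. unfold cont; simpl. apply eplug_closed. split.
  - apply closedF_elift; auto.
  - simpl; lia.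
Qed.

Lemma step_closed : forall x y, step x y -> closed x -> closed y.
Proof.
  intros x y H. unfold closed. destruct H; rewrite !eplug_closed; intros [HF Hr]; split; auto.
  - simpl in Hr; destruct Hr. apply closed_subst; auto.
  - simpl in Hr. rewrite eplug_closed in Hr. destruct Hr as [HE Ht]. simpl in Ht.
    simpl. apply closed_subst; auto. apply closed_cont; auto.
Qed.

Lemma steps_closed : forall x y, steps x y -> closed x -> closed y.
Proof. induction 1; intros; eauto using step_closed. Qed.

Inductive sim (t t' : term) : nat -> term -> term -> Prop :=
| sim_base : sim t t' 1 t t'
| sim_var : forall k, sim t t' 0 (Var k) (Var k)
| sim_lam : forall n a b, sim t t' n a b -> sim t t' n (Lam a) (Lam b)
| sim_app : forall n m a b a' b', sim t t' n a b -> sim t t' m a' b' ->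
    sim t t' (n + m) (App a a') (App b b')
| sim_shift : forall n a b, sim t t' n a b -> sim t t' n (Shift a) (Shift b)
| sim_reset : forall n a b, sim t t' n a b -> sim t t' n (Reset a) (Reset b).

Lemma sim_refl : forall t t' a, sim t t' 0 a a.
Proof.
  induction a; try constructor; auto.
  change 0 with (0 + 0). constructor; auto.
Qed.

Lemma sim_lift : forall t t', closed t -> closed t' ->
  forall n a b, sim t t' n a b -> forall c, sim t t' n (lift c a) (lift c b).
Proof.
  intros t t' Ht Ht'. induction 1; intros c; simpl.
  - rewrite (lift_closed_id t 0), (lift_closed_id t' 0); auto; try lia. constructor.
  - destruct (k <? c); constructor.
  - constructor; auto.
  - constructor; auto.
  - constructor; auto.
  - constructor; auto.
Qed.

Lemma sim_subst : forall t t', closed t -> closed t' ->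
  forall n a b, sim t t' n a b -> forall k u u' m, sim t t' m u u' ->
  exists j, sim t t' j (subst k u a) (subst k u' b).
Proof.
  intros t t' Ht Ht'. induction 1; intros kk u u' m0 Hu; simpl.
  - rewrite (subst_closed_id t 0), (subst_closed_id t' 0); auto; try lia. exists 1; constructor.
  - destruct (k <? kk); [exists 0; constructor|].
    destruct (k =? kk); [eauto| exists 0; constructor].
  - destruct (IHsim (S kk) (lift 0 u) (lift 0 u') m0) as [j Hj].
    { apply sim_lift; auto. }
    exists j; constructor; auto.
  - destruct (IHsim1 kk u u' m0 Hu) as [j1 H1]. destruct (IHsim2 kk u u' m0 Hu) as [j2 H2].
    exists (j1 + j2); constructor; auto.
  - destruct (IHsim (S kk) (lift 0 u) (lift 0 u') m0) as [j Hj].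
    { apply sim_lift; auto. }
    exists j; constructor; auto.
  - destruct (IHsim kk u u' m0 Hu) as [j Hj]. exists j; constructor; auto.
Qed.

Inductive simc (t t' : term) : ectx -> ectx -> Prop :=
| sc_hole : simc t t' EHole EHole
| sc_appR : forall n b b' F F', sim t t' n b b' -> simc t t' F F' ->
    simc t t' (EAppR b F) (EAppR b' F')
| sc_appL : forall n F F' u u', simc t t' F F' -> sim t t' n u u' ->
    simc t t' (EAppL F u) (EAppL F' u')
| sc_reset : forall F F', simc t t' F F' -> simc t t' (EReset F) (EReset F').

Lemma simc_plug : forall t t' F F', simc t t' F F' ->
  forall n a b, sim t t' n a b -> exists j, sim t t' j (eplug F a) (eplug F' b).
Proof.
  induction 1; intros k a0 b0 Hab; simpl.
  - eauto.
  - destruct (IHsimc k a0 b0 Hab) as [j Hj]. exists (n + j). constructor; auto. constructor; auto.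
  - destruct (IHsimc k a0 b0 Hab) as [j Hj]. exists (j + n). constructor; auto.
  - destruct (IHsimc k a0 b0 Hab) as [j Hj]. exists j. constructor; auto.
Qed.

Lemma simc_elift : forall t t', closed t -> closed t' ->
  forall F F', simc t t' F F' -> forall c, simc t t' (elift c F) (elift c F').
Proof.
  intros t t' Ht Ht'. induction 1; intros c; simpl; econstructor; eauto using sim_lift.
Qed.

Lemma sim_cont : forall t t', closed t -> closed t' ->
  forall E E', simc t t' E E' -> exists j, sim t t' j (cont E) (cont E').
Proof.
  intros t t' Ht Ht' E E' H. unfold cont.
  destruct (simc_plug t t' _ _ (simc_elift t t' Ht Ht' _ _ H 0) 0 (Var 0) (Var 0) (sim_var t t' 0)) as [j Hj].
  exists j. constructor. constructor. auto.
Qed.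

Lemma inv_shift : forall t t', step t t' -> forall E s n y, pure E ->
  sim t t' n (eplug E (Shift s)) y ->
  exists E' s' k, pure E' /\ y = eplug E' (Shift s') /\ simc t t' E E' /\ sim t t' k s s'.
Proof.
  intros t t' Hst. induction E; simpl; intros s n y HE Hs.
  - inversion Hs; subst.
    + exfalso; eapply step_shift_inv; eauto.
    + exists EHole, b, n; simpl; repeat split; auto. constructor.
  - inversion Hs; subst.
    + exfalso. eapply (pure_shift_irred (EAppR _ E)); [|exact Hst]; auto.
    + inversion H2; subst.
      * exfalso; eapply step_lam_inv; eauto.
      * destruct (IHE s m b' HE H4) as [E' [s' [k [HE' [-> [Hc Hss]]]]]].
        exists (EAppR b0 E'), s', k; simpl; repeat split; auto. econstructor; eauto.
  - inversion Hs; subst.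
    + exfalso. eapply (pure_shift_irred (EAppL E _)); [|exact Hst]; auto.
    + destruct (IHE s n0 b HE H2) as [E' [s' [k [HE' [-> [Hc Hss]]]]]].
      exists (EAppL E' b'), s', k; simpl; repeat split; auto. econstructor; eauto.
  - destruct HE.
Qed.

Lemma sim_value : forall t t', step t t' -> forall n x y, sim t t' n x y -> is_value x -> is_value y.
Proof.
  intros t t' Hst n x y Hs [b ->]. inversion Hs; subst.
  - exfalso; eapply step_lam_inv; eauto.
  - eexists; eauto.
Qed.

Lemma sim_fwd : forall t t', closed t -> step t t' ->
  forall n x y, sim t t' n x y -> forall x', step x x' ->
  (exists m, m < n /\ sim t t' m x' y) \/ (exists y' m, step y y' /\ sim t t' m x' y').
Proof.
  intros t t' Ht Hst.
  assert (Ht' : closed t') by (eapply step_closed; eauto).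
  induction 1; intros x' Hx'.
  - left. exists 0; split; [lia|]. rewrite <- (step_det _ _ _ Hst Hx'). apply sim_refl.
  - exfalso; eapply step_var_inv; eauto.
  - exfalso; eapply step_lam_inv; eauto.
  - destruct (step_app_inv _ _ _ Hx') as [[a1 [Ha ->]]|[[ba [a1 [-> [Ha ->]]]]|[ba [-> [Hv ->]]]]].
    + destruct (IHsim1 _ Ha) as [[k [Hk Hs]] | [b1 [k [Hb Hs]]]].
      * left; exists (k + m); split; [lia | constructor; auto].
      * right; exists (App b1 b'), (k + m); split.
        -- exact (step_ctx (EAppL EHole b') _ _ Hb).
        -- constructor; auto.
    + inversion H; subst.
      * exfalso; eapply step_lam_inv; eauto.
      * destruct (IHsim2 _ Ha) as [[k [Hk Hs]] | [b1 [k [Hb Hs]]]].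
        -- left; exists (n + k); split; [lia | constructor; auto].
        -- right; exists (App (Lam b0) b1), (n + k); split.
           ++ exact (step_ctx (EAppR b0 EHole) _ _ Hb).
           ++ constructor; auto.
    + inversion H; subst.
      * exfalso; eapply step_lam_inv; eauto.
      * assert (Hv' : is_value b') by (eapply sim_value; [exact Hst|exact H0|exact Hv]).
        destruct (sim_subst t t' Ht Ht' _ _ _ H3 0 a' b' m H0) as [j Hj].
        right; exists (inst b0 b'), j; split; auto.
        exact (step_beta EHole b0 b' Hv').
  - exfalso; eapply step_shift_inv; eauto.
  - destruct (step_reset_inv _ _ Hx') as [[a1 [Ha ->]]|[[E [s [HE [-> ->]]]]|[Hv ->]]].
    + destruct (IHsim _ Ha) as [[k [Hk Hs]] | [b1 [k [Hb Hs]]]].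
      * left; exists k; split; [lia | constructor; auto].
      * right; exists (Reset b1), k; split.
        -- exact (step_ctx (EReset EHole) _ _ Hb).
        -- constructor; auto.
    + destruct (inv_shift t t' Hst E s n b HE H) as [E' [s' [k [HE' [-> [Hc Hss]]]]]].
      destruct (sim_cont t t' Ht Ht' _ _ Hc) as [j Hj].
      destruct (sim_subst t t' Ht Ht' _ _ _ Hss 0 _ _ _ Hj) as [i Hi].
      right; exists (Reset (inst s' (cont E'))), i; split.
      * exact (step_shift EHole E' s' HE').
      * constructor; auto.
    + assert (Hv' : is_value b) by (eapply sim_value; [exact Hst|exact H|exact Hv]).
      right; exists b, n; split; auto. exact (step_reset EHole b Hv').
Qed.

Lemma evals_unique : forall x a, steps x a -> irreducible a ->
  forall b, steps x b -> irreducible b -> a = b.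
Proof.
  induction 1; intros Ha b Hb Hib.
  - inversion Hb; subst; auto. exfalso; apply Ha; eauto.
  - inversion Hb; subst.
    + exfalso; apply Hib; eauto.
    + rewrite (step_det _ _ _ H H1) in *. eauto.
Qed.

Lemma sim_fwd_norm : forall t t', closed t -> step t t' ->
  forall x u, steps x u -> irreducible u -> closed x -> forall n y, sim t t' n x y ->
  exists w, evals y w /\ (is_value u <-> is_value w).
Proof.
  intros t t' Ht Hst. induction 1; intros Hirr Hc n y Hs.
  - destruct (progress t0 Hc) as [Hv|[[E [s [HE ->]]]|[z Hz]]].
    + assert (Hvy : is_value y) by (eapply sim_value; eauto).
      exists y; split; [split; [constructor | intros [z Hz]; eapply value_irred; eauto]|tauto].
    + destruct (inv_shift t t' Hst E s n y HE Hs) as [E' [s' [k [HE' [-> [Hc' Hss]]]]]].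
      exists (eplug E' (Shift s')); split.
      * split; [constructor|intros [z Hz]; eapply pure_shift_irred; eauto].
      * split; intros Hv; exfalso; [eapply (pure_shift_not_value E s HE)|eapply (pure_shift_not_value E' s' HE')]; eauto.
    + exfalso; apply Hirr; eauto.
  - destruct (sim_fwd t t' Ht Hst n t0 y Hs t'0 H) as [[m [Hm Hs']] | [y' [m [Hy Hs']]]].
    + eapply IHsteps; eauto. eapply step_closed; eauto.
    + destruct (IHsteps Hirr (step_closed _ _ H Hc) m y' Hs') as [w [[Hw1 Hw2] Hw3]].
      exists w; split; [split; [eapply steps_step; eauto|auto]|auto].
Qed.

Lemma sim_back : forall t t', closed t -> step t t' ->
  forall y w, steps y w -> irreducible w -> forall n x, sim t t' n x y ->
  exists u, evals x u.
Proof.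
  intros t t' Ht Hst y w H. induction H; intros Hirr n;
  induction n as [n IHn] using (well_founded_induction lt_wf); intros x Hs;
  (destruct (classic (exists x1, step x x1)) as [[x1 Hx1] | Hxirr];
   [| exists x; split; [constructor | exact Hxirr]]).
  - destruct (sim_fwd t t' Ht Hst n x t0 Hs x1 Hx1) as [[m [Hm Hs1]] | [y' [m [Hy Hs1]]]].
    + destruct (IHn m Hm x1 Hs1) as [u [Hu Hiu]]. exists u; split; [eapply steps_step; eauto | auto].
    + exfalso; apply Hirr; eauto.
  - destruct (sim_fwd t t' Ht Hst n x t0 Hs x1 Hx1) as [[m [Hm Hs1]] | [y' [m [Hy Hs1]]]].
    + destruct (IHn m Hm x1 Hs1) as [u [Hu Hiu]]. exists u; split; [eapply steps_step; eauto | auto].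
    + rewrite <- (step_det _ _ _ H Hy) in Hs1.
      destruct (IHsteps Hirr m x1 Hs1) as [u [Hu Hiu]].
      exists u; split; [eapply steps_step; eauto | auto].
Qed.

Definition obs (x y : term) : Prop :=
  ((exists v, evals x v /\ is_value v) <-> (exists v, evals y v /\ is_value v)) /\
  ((exists s, evals x s /\ stuck s) <-> (exists s, evals y s /\ stuck s)).

Lemma sim_obs : forall t t', closed t -> step t t' ->
  forall n x y, sim t t' n x y -> closed x -> obs x y.
Proof.
  intros t t' Ht Hst n x y Hs Hc. split; split.
  - intros [v [[Hv1 Hv2] Hv3]].
    destruct (sim_fwd_norm t t' Ht Hst x v Hv1 Hv2 Hc n y Hs) as [w [Hw Hiff]].
    exists w; split; auto; tauto.
  - intros [w [[Hw1 Hw2] Hw3]].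
    destruct (sim_back t t' Ht Hst y w Hw1 Hw2 n x Hs) as [u [Hu1 Hu2]].
    destruct (sim_fwd_norm t t' Ht Hst x u Hu1 Hu2 Hc n y Hs) as [w' [[Hw'1 Hw'2] Hiff]].
    rewrite (evals_unique _ _ Hw'1 Hw'2 _ Hw1 Hw2) in Hiff.
    exists u; split; [split; auto | tauto].
  - intros [v [[Hv1 Hv2] [Hv3 _]]].
    destruct (sim_fwd_norm t t' Ht Hst x v Hv1 Hv2 Hc n y Hs) as [w [[Hw1 Hw2] Hiff]].
    exists w; split; [split; auto| split; [tauto|auto]].
  - intros [w [[Hw1 Hw2] [Hw3 _]]].
    destruct (sim_back t t' Ht Hst y w Hw1 Hw2 n x Hs) as [u [Hu1 Hu2]].
    destruct (sim_fwd_norm t t' Ht Hst x u Hu1 Hu2 Hc n y Hs) as [w' [[Hw'1 Hw'2] Hiff]].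
    rewrite (evals_unique _ _ Hw'1 Hw'2 _ Hw1 Hw2) in Hiff.
    exists u; split; [split; auto | split; [tauto|auto]].
Qed.

Lemma sim_cplug : forall t t' C, exists n, sim t t' n (cplug C t) (cplug C t').
Proof.
  induction C; simpl.
  - exists 1; constructor.
  - destruct IHC as [n H]; exists n; constructor; auto.
  - destruct IHC as [n H]; exists (0 + n); constructor; auto using sim_refl.
  - destruct IHC as [n H]; exists (n + 0); constructor; auto using sim_refl.
  - destruct IHC as [n H]; exists n; constructor; auto.
  - destruct IHC as [n H]; exists n; constructor; auto.
Qed.

Lemma step_equiv : forall t t', closed t -> step t t' -> ctx_equiv t t'.
Proof.
  intros t t' Ht Hst C H1 H2. destruct (sim_cplug t t' C) as [n Hs].
  exact (sim_obs t t' Ht Hst n _ _ Hs H1).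
Qed.

Fixpoint cdep (n : nat) (C : ctx) : nat :=
  match C with
  | CHole => n
  | CLam C' => cdep (S n) C'
  | CAppR _ C' => cdep n C'
  | CAppL C' _ => cdep n C'
  | CShift C' => cdep (S n) C'
  | CReset C' => cdep n C'
  end.

Fixpoint cclosed (n : nat) (C : ctx) : Prop :=
  match C with
  | CHole => True
  | CLam C' => cclosed (S n) C'
  | CAppR u C' => closed_at n u /\ cclosed n C'
  | CAppL C' u => cclosed n C' /\ closed_at n u
  | CShift C' => cclosed (S n) C'
  | CReset C' => cclosed n C'
  end.

Lemma cplug_closed : forall C n x, closed_at n (cplug C x) <-> cclosed n C /\ closed_at (cdep n C) x.
Proof. induction C; simpl; intros; try rewrite IHC; tauto. Qed.

Fixpoint ccomp (C D : ctx) : ctx :=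
  match C with
  | CHole => D
  | CLam C' => CLam (ccomp C' D)
  | CAppR u C' => CAppR u (ccomp C' D)
  | CAppL C' u => CAppL (ccomp C' D) u
  | CShift C' => CShift (ccomp C' D)
  | CReset C' => CReset (ccomp C' D)
  end.

Lemma cplug_ccomp : forall C D x, cplug (ccomp C D) x = cplug C (cplug D x).
Proof. induction C; simpl; intros; try rewrite IHC; reflexivity. Qed.

Lemma closed_swap : forall C a b, closed a -> closed b -> closed (cplug C a) -> closed (cplug C b).
Proof.
  unfold closed; intros C a b Ha Hb H. apply cplug_closed in H. apply cplug_closed.
  destruct H; split; auto. eapply closed_mono; eauto; lia.
Qed.

Lemma obs_refl : forall x, obs x x.
Proof. unfold obs; tauto. Qed.
Lemma obs_trans : forall x y z, obs x y -> obs y z -> obs x z.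
Proof. unfold obs; tauto. Qed.

Lemma equiv_refl : forall a, ctx_equiv a a.
Proof. intros a C _ _. apply obs_refl. Qed.
Lemma equiv_sym : forall a b, ctx_equiv a b -> ctx_equiv b a.
Proof. intros a b H C H1 H2. destruct (H C H2 H1). unfold obs in *; tauto. Qed.
Lemma equiv_trans : forall a b c, closed a -> closed b -> closed c ->
  ctx_equiv a b -> ctx_equiv b c -> ctx_equiv a c.
Proof.
  intros a b c Ha Hb Hc H1 H2 C Ca Cc.
  assert (Cb : closed (cplug C b)) by (eapply closed_swap; [exact Ha| |]; eauto).
  exact (obs_trans _ _ _ (H1 C Ca Cb) (H2 C Cb Cc)).
Qed.

Lemma tclos_obs : forall R, (forall x y, R x y -> closed x /\ closed y /\ ctx_equiv x y) ->
  forall a b, tclos R a b -> forall C, closed (cplug C a) -> closed (cplug C b) ->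
  obs (cplug C a) (cplug C b).
Proof.
  intros R HR. induction 1; intros C H1 H2.
  - destruct (HR a b H) as [Ha [Hb He]]. exact (He C H1 H2).
  - apply obs_refl.
  - specialize (IHtclos (ccomp C (CLam CHole))). rewrite !cplug_ccomp in IHtclos. auto.
  - assert (Hm : closed (cplug C (App b a'))).
    { unfold closed in *. apply cplug_closed in H1. apply cplug_closed in H2. apply cplug_closed.
      simpl in *. tauto. }
    apply obs_trans with (cplug C (App b a')).
    + specialize (IHtclos1 (ccomp C (CAppL CHole a'))). rewrite !cplug_ccomp in IHtclos1. auto.
    + specialize (IHtclos2 (ccomp C (CAppR b CHole))). rewrite !cplug_ccomp in IHtclos2. auto.
  - specialize (IHtclos (ccomp C (CShift CHole))). rewrite !cplug_ccomp in IHtclos. auto.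
  - specialize (IHtclos (ccomp C (CReset CHole))). rewrite !cplug_ccomp in IHtclos. auto.
Qed.

Lemma tclos_equiv : forall R, (forall x y, R x y -> closed x /\ closed y /\ ctx_equiv x y) ->
  forall a b, tclos R a b -> ctx_equiv a b.
Proof. intros R HR a b H C H1 H2. exact (tclos_obs R HR a b H C H1 H2). Qed.

Lemma steps_equiv : forall x y, steps x y -> closed x -> ctx_equiv x y.
Proof.
  induction 1; intros Hc.
  - apply equiv_refl.
  - assert (Hc' : closed t') by (eapply step_closed; eauto).
    apply equiv_trans with t'; auto.
    + eapply steps_closed; eauto.
    + apply step_equiv; auto.
Qed.

Lemma hat_tclos : forall R F0 F1, hat R F0 F1 -> forall a b, tclos R a b ->
  tclos R (eplug F0 a) (eplug F1 b).
Proof.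
  induction 1; intros a b Hab; simpl; auto.
  - destruct H0 as [H0 _]. apply tc_app; auto.
  - destruct H0 as [H0 _]. apply tc_app; auto.
  - apply tc_reset; auto.
Qed.

Lemma hat_closed : forall R F0 F1, hat R F0 F1 -> closedF 0 F0 /\ closedF 0 F1.
Proof.
  induction 1; simpl; try tauto.
  - destruct H0 as [_ [H2 H3]]. unfold closed in *; simpl in *. tauto.
  - destruct H0 as [_ [H2 H3]]. unfold closed in *; simpl in *. tauto.
Qed.

Definition Xenv (E : rel) : Prop := is_env E /\ forall a b, E a b -> ctx_equiv a b.

Definition XX : envrel :=
  {| envs := Xenv;
     trip := fun E t0 t1 => Xenv E /\ closed t0 /\ closed t1 /\ ctx_equiv t0 t1 |}.

Lemma Xenv_add : forall E a b, Xenv E -> closed a -> closed b ->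
  ((is_value a /\ is_value b) \/ (stuck a /\ stuck b)) -> ctx_equiv a b ->
  Xenv (rel_add E a b).
Proof.
  intros E a b [HE1 HE2] Ha Hb Hk Hab. split.
  - intros x y [H | [-> ->]]; auto.
  - intros x y [H | [-> ->]]; auto.
Qed.

Lemma match_val : forall t0 t1, closed t0 -> closed t1 -> ctx_equiv t0 t1 -> is_value t0 ->
  exists v1, steps t1 v1 /\ is_value v1 /\ closed v1 /\ ctx_equiv t0 v1.
Proof.
  intros t0 t1 H0 H1 Heq Hv.
  destruct (proj1 (proj1 (Heq CHole H0 H1))) as [v1 [[Hs Hi] Hv1]].
  { exists t0; split; [split; [constructor| intros [z Hz]; eapply value_irred; eauto]|auto]. }
  assert (Hc : closed v1) by (eapply steps_closed; eauto).
  exists v1; split; [auto|split; [auto|split; [auto|]]].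
  apply equiv_trans with t1; auto. apply steps_equiv; auto.
Qed.

Lemma match_stuck : forall t0 t1, closed t0 -> closed t1 -> ctx_equiv t0 t1 -> stuck t0 ->
  exists s1, steps t1 s1 /\ stuck s1 /\ closed s1 /\ ctx_equiv t0 s1.
Proof.
  intros t0 t1 H0 H1 Heq Hv.
  destruct (proj1 (proj2 (Heq CHole H0 H1))) as [v1 [[Hs Hi] Hv1]].
  { exists t0; split; [split; [constructor| apply Hv]|auto]. }
  assert (Hc : closed v1) by (eapply steps_closed; eauto).
  exists v1; split; [auto|split; [auto|split; [auto|]]].
  apply equiv_trans with t1; auto. apply steps_equiv; auto.
Qed.

Lemma XX_bisim : env_bisim XX.
Proof.
  split; [|split].
  - split.
    + intros E [HE _]; auto.
    + intros E t0 t1 [[HE _] [H0 [H1 _]]]; auto.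
  - intros E t0 t1 [HX [H0 [H1 Heq]]]. simpl.
    assert (Heq' : ctx_equiv t1 t0) by (apply equiv_sym; auto).
    repeat split.
    + intros t0' Hs. exists t1; split; [constructor|].
      assert (Hc : closed t0') by (eapply step_closed; eauto).
      split; [exact HX|split; [auto|split; [auto|]]]. apply equiv_trans with t0; auto.
      apply equiv_sym; apply step_equiv; auto.
    + intros Hv. destruct (match_val t0 t1 H0 H1 Heq Hv) as [v1 [Hs [Hv1 [Hc He]]]].
      exists v1; split; [auto|split; [auto|]]. apply Xenv_add; auto.
    + intros Hv. destruct (match_stuck t0 t1 H0 H1 Heq Hv) as [v1 [Hs [Hv1 [Hc He]]]].
      exists v1; split; [auto|split; [auto|]]. apply Xenv_add; auto.
    + intros t1' Hs. exists t0; split; [constructor|].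
      assert (Hc : closed t1') by (eapply step_closed; eauto).
      split; [exact HX|split; [auto|split; [auto|]]]. apply equiv_trans with t1; auto.
      apply step_equiv; auto.
    + intros Hv. destruct (match_val t1 t0 H1 H0 Heq' Hv) as [v1 [Hs [Hv1 [Hc He]]]].
      exists v1; split; [auto|split; [auto|]]. apply Xenv_add; auto. apply equiv_sym; auto.
    + intros Hv. destruct (match_stuck t1 t0 H1 H0 Heq' Hv) as [v1 [Hs [Hv1 [Hc He]]]].
      exists v1; split; [auto|split; [auto|]]. apply Xenv_add; auto. apply equiv_sym; auto.
  - intros E [HenvE HeqE]. simpl.
    assert (HR : forall x y, E x y -> closed x /\ closed y /\ ctx_equiv x y).
    { intros x y H. destruct (HenvE x y H) as [? [? _]]; auto. }
    split.
    + intros b0 b1 v0 v1 HE Hv0 Hv1 [Htc [Hc0 Hc1]].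
      destruct (HR _ _ HE) as [Cb0 [Cb1 _]].
      assert (HA : ctx_equiv (App (Lam b0) v0) (App (Lam b1) v1)).
      { apply (tclos_equiv E HR). apply tc_app; auto. apply tc_base; auto. }
      assert (CA0 : closed (App (Lam b0) v0)) by (split; auto).
      assert (CA1 : closed (App (Lam b1) v1)) by (split; auto).
      assert (S0 : step (App (Lam b0) v0) (inst b0 v0)) by exact (step_beta EHole b0 v0 Hv0).
      assert (S1 : step (App (Lam b1) v1) (inst b1 v1)) by exact (step_beta EHole b1 v1 Hv1).
      assert (C0 : closed (inst b0 v0)) by (eapply step_closed; eauto).
      assert (C1 : closed (inst b1 v1)) by (eapply step_closed; eauto).
      split; [split; auto|]. split; [auto|split; [auto|]].
      apply equiv_trans with (App (Lam b0) v0); auto.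
      { apply equiv_sym; apply step_equiv; auto. }
      apply equiv_trans with (App (Lam b1) v1); auto.
      apply step_equiv; auto.
    + intros E0 E1 t0 t1 E0' E1' HP0 HP1 HE HP0' HP1' Hhat.
      destruct (HR _ _ HE) as [Cs0 [Cs1 _]].
      destruct (hat_closed _ _ _ Hhat) as [CF0 CF1].
      set (A0 := Reset (eplug E0' (eplug E0 (Shift t0)))).
      set (A1 := Reset (eplug E1' (eplug E1 (Shift t1)))).
      assert (HA : ctx_equiv A0 A1).
      { apply (tclos_equiv E HR). apply tc_reset. apply (hat_tclos E); auto. apply tc_base; auto. }
      assert (CA0 : closed A0) by (unfold closed, A0; simpl; apply eplug_closed; auto).
      assert (CA1 : closed A1) by (unfold closed, A1; simpl; apply eplug_closed; auto).
      assert (S0 : step A0 (Reset (inst t0 (cont2 E0' E0)))).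
      { unfold A0. rewrite <- eplug_ecomp, <- cont_ecomp.
        exact (step_shift EHole (ecomp E0' E0) t0 (pure_ecomp _ _ HP0' HP0)). }
      assert (S1 : step A1 (Reset (inst t1 (cont2 E1' E1)))).
      { unfold A1. rewrite <- eplug_ecomp, <- cont_ecomp.
        exact (step_shift EHole (ecomp E1' E1) t1 (pure_ecomp _ _ HP1' HP1)). }
      assert (C0 : closed (Reset (inst t0 (cont2 E0' E0)))) by (eapply step_closed; eauto).
      assert (C1 : closed (Reset (inst t1 (cont2 E1' E1)))) by (eapply step_closed; eauto).
      split; [split; auto|]. split; [auto|split; [auto|]].
      apply equiv_trans with A0; auto.
      { apply equiv_sym; apply step_equiv; auto. }
      apply equiv_trans with A1; auto.
      apply step_equiv; auto.
Qed.

Theorem theorem1 : forall t0 t1 : term,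
  closed t0 -> closed t1 -> ctx_equiv t0 t1 -> bisimilar empty_rel t0 t1.
Proof.
  intros t0 t1 H0 H1 Heq. exists XX. split; [exact XX_bisim|].
  simpl. split; [split|]; auto.
  - intros a b [].
  - intros a b [].
Qed.
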